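(* For every pair $s,t\in\{0,1\}^{<\mathbb N}$ that are independent (neither is a prefix of the other), the element $y_sy_t^{-1}$ lies in $S$.
   Context: Let $\{0,1\}^{\mathbb N}$ be the Cantor set of infinite binary sequences and $\{0,1\}^{<\mathbb N}$ the set of finite binary words, including the empty word; juxtaposition denotes concatenation, $0^n,1^n$ denote constant words. Homeomorphisms act on the right. Define $x,y$ by $00\eta\cdot x=0\eta$, $01\eta\cdot x=10\eta$, $1\eta\cdot x=11\eta$, and recursively $00\eta\cdot y=0(\eta\cdot y)$, $01\eta\cdot y=10(\eta\cdot y^{-1})$, $1\eta\cdot y=11(\eta\cdot y)$; $x_s$ (resp. $y_s$) sends $s\eta\mapsto s(\eta\cdot x)$ (resp. $s(\eta\cdot y)$) and fixes sequences not beginning with $s$. For $n\ge0$, $p_n$ is the homeomorphism with $1^k0\eta\cdot p_n=1^{k+1}0\eta$ for $0\le k\le n-1$, $1^n0\eta\cdot p_n=1^{n+1}\eta$, and $1^{n+1}\eta\cdot p_n=0\eta$. $T$ is the group generated by all $x_s$ and all $p_n$, and $S=\langle T,\ y_{10}y_{110}^{-1}\rangle$. *)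

(* Defs.v *)
From mathcomp Require Import all_boot.
Set Implicit Arguments. Unset Strict Implicit. Unset Printing Implicit Defensive.

(* The Cantor set {0,1}^N : infinite binary sequences, false = 0, true = 1. *)
Definition cantor := nat -> bool.
(* Finite binary words are [seq bool]; homeomorphisms are functions
   cantor -> cantor, applied on the right: eta . (g h) = h (g eta). *)

Definition shift (n : nat) (xi : cantor) : cantor := fun i => xi (n + i).

Definition prepend (w : seq bool) (xi : cantor) : cantor :=
  fun i => if i < size w then nth false w i else xi (i - size w).

Definition hasprefix (w : seq bool) (xi : cantor) : bool :=
  all (fun i => xi i == nth false w i) (iota 0 (size w)).

Definition local (s : seq bool) (f : cantor -> cantor) : cantor -> cantor :=
  fun xi => if hasprefix s xi then prepend s (f (shift (size s) xi)) else xi.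

Definition xmap (xi : cantor) : cantor :=
  if xi 0 then prepend [:: true; true] (shift 1 xi)
  else if xi 1 then prepend [:: true; false] (shift 2 xi)
  else prepend [:: false] (shift 2 xi).

(* y and y^{-1}, given by their mutually recursive definitions, realised as a
   two-state transducer (state false = y, state true = y^{-1}):
     00eta.y = 0(eta.y), 01eta.y = 10(eta.y^{-1}), 1eta.y = 11(eta.y);
     0eta.y^{-1} = 00(eta.y^{-1}), 10eta.y^{-1} = 01(eta.y),
     11eta.y^{-1} = 1(eta.y^{-1}).
   One step returns (output word, number of input letters read, next state). *)
Definition ystep (inv : bool) (xi : cantor) : seq bool * nat * bool :=
  if ~~ inv then
    (if xi 0 then ([:: true; true], 1, false)
     else if xi 1 then ([:: true; false], 2, true)
     else ([:: false], 2, false))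
  else
    (if xi 0 then
       (if xi 1 then ([:: true], 2, true) else ([:: false; true], 2, false))
     else ([:: false; false], 1, true)).

Fixpoint yrun (n : nat) (inv : bool) (xi : cantor) : seq bool :=
  match n with
  | 0 => [::]
  | n'.+1 =>
      let '(o, c, inv') := ystep inv xi in o ++ yrun n' inv' (shift c xi)
  end.

(* every step outputs at least one letter, so k+1 steps determine letter k *)
Definition ygen (inv : bool) (xi : cantor) : cantor :=
  fun k => nth false (yrun k.+1 inv xi) k.

Definition ymap : cantor -> cantor := ygen false.
Definition ymap_inv : cantor -> cantor := ygen true.

Definition pnmap (n : nat) (xi : cantor) : cantor :=
  if hasprefix (nseq n.+1 true) xi then prepend [:: false] (shift n.+1 xi)
  else if hasprefix (rcons (nseq n true) false) xi
       then prepend (nseq n.+1 true) (shift n.+1 xi)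
  else prepend [:: true] xi.

Definition wmap (xi : cantor) : cantor :=
  local [:: true; true; false] ymap_inv (local [:: true; false] ymap xi).

Inductive S_gen : (cantor -> cantor) -> Prop :=
  | Sgen_x (s : seq bool) : S_gen (local s xmap)
  | Sgen_p (n : nat) : S_gen (pnmap n)
  | Sgen_w : S_gen wmap.

(* S = the subgroup (of the homeomorphism group) generated by S_gen:
   words in generators and their inverses, up to pointwise equality. *)
Inductive inS : (cantor -> cantor) -> Prop :=
  | inS_id : inS id
  | inS_ext f g : inS f -> (forall xi, f xi =1 g xi) -> inS g
  | inS_mul f g : inS f -> S_gen g -> inS (fun xi => g (f xi))
  | inS_mulinv f g h : inS f -> S_gen g ->
      (forall xi, h (g xi) =1 xi) -> (forall xi, g (h xi) =1 xi) ->
      inS (fun xi => h (f xi)).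

(* Main.v *)
Require Import Defs.
From mathcomp Require Import all_boot.
From Stdlib Require Import FunctionalExtensionality.
Set Implicit Arguments. Unset Strict Implicit. Unset Printing Implicit Defensive.


Lemma fe (a b : cantor) : (forall i, a i = b i) -> a = b.
Proof. exact: functional_extensionality. Qed.

Lemma prep_nil (e : cantor) : prepend [::] e = e.
Proof. by apply: fe => i; rewrite /prepend /= subn0. Qed.

Lemma prep_0 b a (e : cantor) : prepend (b :: a) e 0 = b.
Proof. by []. Qed.

Lemma prep_S b a (e : cantor) i : prepend (b :: a) e i.+1 = prepend a e i.
Proof. by rewrite /prepend /= ltnS subSS. Qed.

Lemma prep_cat a b (e : cantor) : prepend (a ++ b) e = prepend a (prepend b e).
Proof.
elim: a => [|x a IH]; first by rewrite prep_nil.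
apply: fe => [[|i]] //=. by rewrite !prep_S IH.
Qed.

Lemma shiftS n (x : cantor) : shift n.+1 x = shift n (shift 1 x).
Proof. by apply: fe => i; rewrite /shift addnC addnS addnC. Qed.

Lemma shift0 (x : cantor) : shift 0 x = x.
Proof. by apply: fe. Qed.

Lemma shift1_cons b a (e : cantor) : shift 1 (prepend (b :: a) e) = prepend a e.
Proof. by apply: fe => i; rewrite /shift add1n prep_S. Qed.

Lemma shift_prep a (e : cantor) : shift (size a) (prepend a e) = e.
Proof.
elim: a => [|x a IH]; first by rewrite shift0 prep_nil.
by rewrite /= shiftS shift1_cons.
Qed.

Lemma hp_nil (x : cantor) : hasprefix [::] x = true.
Proof. by []. Qed.

Lemma hasprefixP w (x : cantor) :
  reflect (forall i, i < size w -> x i = nth false w i) (hasprefix w x).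
Proof.
apply: (iffP allP) => H i.
- by move=> Hi; apply/eqP/H; rewrite mem_iota.
- by rewrite mem_iota add0n => /andP[_ Hi]; apply/eqP/H.
Qed.

Lemma hp_cons b a (x : cantor) :
  hasprefix (b :: a) x = (x 0 == b) && hasprefix a (shift 1 x).
Proof.
apply/hasprefixP/andP => [H|[/eqP H0 /hasprefixP H] [|i]] //=.
- split; first by apply/eqP/(H 0).
  by apply/hasprefixP => i Hi; rewrite /shift add1n; apply: (H i.+1).
- by rewrite ltnS => Hi; rewrite -(H i Hi) /shift add1n.
Qed.

Lemma hp_cat_pre a b (e : cantor) : hasprefix (a ++ b) (prepend a e) = hasprefix b e.
Proof.
elim: a => [|x a IH]; first by rewrite prep_nil.
by rewrite /= hp_cons prep_0 eqxx shift1_cons IH.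
Qed.

Lemma hp_pre a (e : cantor) : hasprefix a (prepend a e).
Proof. by have := hp_cat_pre a [::] e; rewrite cats0. Qed.

Lemma hp_catl a b (x : cantor) : hasprefix (a ++ b) x -> hasprefix a x.
Proof.
move/hasprefixP=> H; apply/hasprefixP => i Hi.
by rewrite H ?nth_cat ?Hi // size_cat ltn_addr.
Qed.

Lemma decomp a (x : cantor) : hasprefix a x -> prepend a (shift (size a) x) = x.
Proof.
move/hasprefixP => H; apply: fe => i; rewrite /prepend.
case: ifP => Hi; first by rewrite H.
by rewrite /shift subnKC // leqNgt Hi.
Qed.

Lemma local_pre s f (e : cantor) : local s f (prepend s e) = prepend s (f e).
Proof. by rewrite /local hp_pre shift_prep. Qed.

Lemma local_out s f (x : cantor) : ~~ hasprefix s x -> local s f x = x.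
Proof. by rewrite /local => /negbTE ->. Qed.

Definition disj (a b : seq bool) := forall x : cantor, hasprefix a x -> hasprefix b x -> False.

Lemma disj_sym a b : disj a b -> disj b a.
Proof. by move=> H x h1 h2; apply: (H x). Qed.

Lemma disj_catl a b q : disj a b -> disj (a ++ q) b.
Proof. by move=> H x /hp_catl h1 h2; apply: (H x). Qed.

Lemma disj_sib u x y p q : x != y -> disj (u ++ x :: p) (u ++ y :: q).
Proof.
move=> Hxy e /hasprefixP h1 /hasprefixP h2.
have := h1 (size u); have := h2 (size u).
rewrite !size_cat /= !addnS !ltnS !leq_addr !nth_cat ltnn subnn /=.
move=> /(_ isT) Ey /(_ isT) Ex; by rewrite -Ex Ey eqxx in Hxy.
Qed.

Lemma disj_pre a b e : disj a b -> hasprefix b (prepend a e) = false.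
Proof. by move=> H; apply/negP => /(H _ (hp_pre a e)). Qed.

Lemma local_disj s a f e : disj a s -> local s f (prepend a e) = prepend a e.
Proof. by move=> H; rewrite local_out // disj_pre. Qed.

Lemma local_comm a b f g x : disj a b ->
  local a f (local b g x) = local b g (local a f x).
Proof.
move=> H.
case Ha: (hasprefix a x).
  rewrite -(decomp Ha) (local_disj g _ H) !local_pre (local_disj g _ H) //.
case Hb: (hasprefix b x).
  have H' := disj_sym H.
  by rewrite -(decomp Hb) (local_disj f _ H') !local_pre (local_disj f _ H').
by rewrite !local_out ?Ha ?Hb.
Qed.

Lemma local_cat s q f x : local s (local q f) x = local (s ++ q) f x.
Proof.
case Hs: (hasprefix s x); last first.
  rewrite !local_out ?Hs //; apply/negP => /hp_catl; by rewrite Hs.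
rewrite -(decomp Hs) local_pre.
case Hq: (hasprefix q (shift (size s) x)).
  by rewrite -(decomp Hq) local_pre -!prep_cat local_pre.
by rewrite local_out ?Hq // local_out // hp_cat_pre Hq.
Qed.

Lemma local_comp s f g x : local s f (local s g x) = local s (fun e => f (g e)) x.
Proof.
case Hs: (hasprefix s x); last by rewrite !local_out ?Hs.
by rewrite -(decomp Hs) !local_pre.
Qed.

Lemma local_ext s f g x : (forall e, f e = g e) -> local s f x = local s g x.
Proof. by move=> H; rewrite /local H. Qed.


Lemma ystep_size inv x : 0 < size (ystep inv x).1.1.
Proof. by rewrite /ystep; case: inv; case: (x 0); case: (x 1). Qed.

Lemma yrun_S n inv x : yrun n.+1 inv x =
  (ystep inv x).1.1 ++ yrun n (ystep inv x).2 (shift (ystep inv x).1.2 x).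
Proof. by rewrite /=; case: (ystep inv x) => [[o c] i']. Qed.

Lemma yrun_cat m d inv x : exists r, yrun (m + d) inv x = yrun m inv x ++ r.
Proof.
elim: m inv x => [|m IH] inv x; first by exists (yrun d inv x).
rewrite addSn !yrun_S; have [r ->] := IH (ystep inv x).2 (shift (ystep inv x).1.2 x).
by exists r; rewrite catA.
Qed.

Lemma yrun_size m inv x : m <= size (yrun m inv x).
Proof.
elim: m inv x => [|m IH] inv x //.
by rewrite yrun_S size_cat -add1n leq_add // ystep_size.
Qed.

Lemma ygen_unfold inv x : ygen inv x =
  prepend (ystep inv x).1.1 (ygen (ystep inv x).2 (shift (ystep inv x).1.2 x)).
Proof.
apply: fe => k; rewrite /ygen yrun_S nth_cat /prepend.
case: ifP => // Hk.
have Ho := ystep_size inv x.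
set o := (ystep inv x).1.1 in Ho Hk *.
set j := k - size o.
have Ek : k = j.+1 + (size o).-1.
  rewrite /j addSn -addnS prednK // subnK //; by rewrite leqNgt Hk.
rewrite {1}Ek; have [r ->] := yrun_cat j.+1 (size o).-1 (ystep inv x).2 (shift (ystep inv x).1.2 x).
by rewrite nth_cat (leq_trans _ (yrun_size _ _ _)).
Qed.

Lemma sp1 a (e : cantor) : shift 1 (prepend [:: a] e) = e.
Proof. exact: (shift_prep [:: a] e). Qed.
Lemma sp2 a b (e : cantor) : shift 2 (prepend [:: a; b] e) = e.
Proof. exact: (shift_prep [:: a; b] e). Qed.

Ltac ycomp := rewrite /ymap /ymap_inv ygen_unfold /ystep ?prep_0 ?prep_S ?prep_0 /=; first [by rewrite sp2 | by rewrite sp1].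

Lemma Y1 e : ymap (prepend [:: false; false] e) = prepend [:: false] (ymap e).
Proof. by ycomp. Qed.
Lemma Y2 e : ymap (prepend [:: false; true] e) = prepend [:: true; false] (ymap_inv e).
Proof. by ycomp. Qed.
Lemma Y3 e : ymap (prepend [:: true] e) = prepend [:: true; true] (ymap e).
Proof. by ycomp. Qed.
Lemma Yi1 e : ymap_inv (prepend [:: false] e) = prepend [:: false; false] (ymap_inv e).
Proof. by ycomp. Qed.
Lemma Yi2 e : ymap_inv (prepend [:: true; false] e) = prepend [:: false; true] (ymap e).
Proof. by ycomp. Qed.
Lemma Yi3 e : ymap_inv (prepend [:: true; true] e) = prepend [:: true] (ymap_inv e).
Proof. by ycomp. Qed.

Lemma decomp1 (x : cantor) : x = prepend [:: x 0] (shift 1 x).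
Proof. apply: fe => -[|i]; first by rewrite prep_0.
by rewrite prep_S prep_nil /shift add1n. Qed.

Lemma cases1 (P : cantor -> Prop) : (forall b e, P (prepend [:: b] e)) -> forall x, P x.
Proof. move=> H x. rewrite (decomp1 x). apply: H. Qed.

Definition agree n (a b : cantor) := forall k, k < n -> a k = b k.

Lemma agree_pre n o a b : agree n a b -> agree (n + size o) (prepend o a) (prepend o b).
Proof.
move=> H k Hk; rewrite /prepend; case: ifP => // Ho; apply: H.
rewrite ltn_subLR; first by rewrite addnC. by rewrite leqNgt Ho.
Qed.

Lemma agree_mono n m a b : m <= n -> agree n a b -> agree m a b.
Proof. by move=> Hm H k Hk; apply: H; apply: leq_trans Hm. Qed.

Lemma pre2 b c (e : cantor) : prepend [:: b] (prepend [:: c] e) = prepend [:: b; c] e.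
Proof. rewrite -prep_cat. reflexivity. Qed.

Lemma pre1_2 b c (e : cantor) : prepend [:: b; c] e = prepend [:: b] (prepend [:: c] e).
Proof. rewrite -prep_cat. reflexivity. Qed.
Lemma yy_agree n : forall x, agree n (ymap (ymap_inv x)) x /\ agree n (ymap_inv (ymap x)) x.
Proof.
elim: n => [|n IH] x; first by split=> k.
have A m o a b : agree m a b -> n.+1 <= m + size o -> agree n.+1 (prepend o a) (prepend o b).
  by move=> H Hm; apply: agree_mono Hm _; apply: agree_pre.
split.
- elim/cases1: x => [[]] e.
  + elim/cases1: e => [[]] e; rewrite pre2.
    * rewrite Yi3 Y3; apply: A; first exact: (proj1 (IH e)). by rewrite addn2.
    * rewrite Yi2 Y2; apply: A; first exact: (proj2 (IH e)). by rewrite addn2.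
  + rewrite Yi1 Y1; apply: A; first exact: (proj1 (IH e)). by rewrite addn1.
- elim/cases1: x => [[]] e.
  + rewrite Y3 Yi3; apply: A; first exact: (proj2 (IH e)). by rewrite addn1.
  + elim/cases1: e => [[]] e; rewrite pre2.
    * rewrite Y2 Yi2; apply: A; first exact: (proj1 (IH e)). by rewrite addn2.
    * rewrite Y1 Yi1; apply: A; first exact: (proj2 (IH e)). by rewrite addn2.
Qed.


Lemma yyi x : ymap (ymap_inv x) = x.
Proof. apply: fe => k; apply: (proj1 (yy_agree k.+1 x)); exact: ltnSn. Qed.
Lemma yiy x : ymap_inv (ymap x) = x.
Proof. apply: fe => k; apply: (proj2 (yy_agree k.+1 x)); exact: ltnSn. Qed.


Lemma inS_comp f g : inS f -> inS g -> inS (fun x => g (f x)).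
Proof.
move=> Hf; elim.
- by apply: inS_ext Hf _ => x i.
- move=> g0 g1 _ IH E; apply: inS_ext IH _ => x; exact: E.
- move=> g0 h _ IH Hh; exact: (inS_mul IH Hh).
- move=> g0 h k _ IH Hh E1 E2; exact: (inS_mulinv IH Hh E1 E2).
Qed.

Definition good (f fi : cantor -> cantor) :=
  [/\ inS f, inS fi, (forall x, fi (f x) = x) & (forall x, f (fi x) = x)].

Lemma good_sym f fi : good f fi -> good fi f.
Proof. by case=> *; split. Qed.

Lemma good_id : good id id.
Proof. by split=> //; exact: inS_id. Qed.

Lemma good_comp f fi g gi : good f fi -> good g gi ->
  good (fun x => g (f x)) (fun x => fi (gi x)).
Proof.
case=> a b c d [a' b' c' d']; split; try exact: inS_comp.
- by move=> x; rewrite c' c.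
- by move=> x; rewrite d d'.
Qed.

Lemma good_ext f fi f' fi' : good f fi -> (forall x, f x = f' x) ->
  (forall x, fi' (f' x) = x) -> (forall x, f' (fi' x) = x) -> good f' fi'.
Proof.
case=> a b c d E c2 d2; split=> //.
- by apply: inS_ext a _ => x i; rewrite E.
- apply: inS_ext b _ => x i.
  by rewrite -{1}(d2 x) -E c.
Qed.

Lemma good_gen g gi : S_gen g -> (forall x, gi (g x) = x) -> (forall x, g (gi x) = x) ->
  good g gi.
Proof.
move=> Hg E1 E2; split => //.
- by apply: (inS_ext (inS_mul inS_id Hg)) => x i.
- by apply: (inS_ext (inS_mulinv inS_id Hg (fun x i => congr1 (fun y : cantor => y i) (E1 x)) (fun x i => congr1 (fun y : cantor => y i) (E2 x)))) => x i.
Qed.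

Definition zfun a b (x : cantor) := local b ymap_inv (local a ymap x).

Lemma local_id s x : local s (fun e => e) x = x.
Proof.
case Hs: (hasprefix s x); last by rewrite local_out ?Hs.
rewrite -(decomp Hs) local_pre; reflexivity.
Qed.

Lemma loc_yyi s x : local s ymap (local s ymap_inv x) = x.
Proof. by rewrite local_comp (local_ext _ _ yyi) local_id. Qed.
Lemma loc_yiy s x : local s ymap_inv (local s ymap x) = x.
Proof. by rewrite local_comp (local_ext _ _ yiy) local_id. Qed.

Lemma zinv a b x : zfun b a (zfun a b x) = x.
Proof. by rewrite /zfun loc_yyi loc_yiy. Qed.

Definition Z a b := good (zfun a b) (zfun b a).

Lemma Z_of a b : inS (zfun a b) -> inS (zfun b a) -> Z a b.
Proof. by move=> *; split=> // x; apply: zinv. Qed.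

Lemma Z_sym a b : Z a b -> Z b a.
Proof. exact: good_sym. Qed.

Lemma Z_trans s u t : Z s u -> Z u t -> Z s t.
Proof.
move=> H1 H2; apply: good_ext (good_comp H1 H2) _ _ _; try (move=> x; exact: zinv).
by move=> x; rewrite /zfun loc_yyi.
Qed.

Definition ConeMap (g : cantor -> cantor) c c' := forall e, g (prepend c e) = prepend c' e.

Lemma CM_inv g gi a a' : good g gi -> ConeMap g a a' -> ConeMap gi a' a.
Proof. by case=> _ _ E _ H e; rewrite -H E. Qed.

Lemma CM_cat g a a' q : ConeMap g a a' -> ConeMap g (a ++ q) (a' ++ q).
Proof. by move=> H e; rewrite !prep_cat H. Qed.

Lemma CM_comp g h a a' a'' : ConeMap g a a' -> ConeMap h a' a'' ->
  ConeMap (fun x => h (g x)) a a''.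
Proof. by move=> H1 H2 e; rewrite H1 H2. Qed.

Lemma conj_id g gi a a' b b' : good g gi -> ConeMap g a a' -> ConeMap g b b' ->
  disj a b -> disj a' b' -> forall x, g (zfun a b (gi x)) = zfun a' b' x.
Proof.
move=> Hg Ha Hb Dab Dab' x.
have Ha' := CM_inv Hg Ha; have Hb' := CM_inv Hg Hb.
have Dba := disj_sym Dab; have Dba' := disj_sym Dab'.
case Hx: (hasprefix a' x).
  rewrite -(decomp Hx) Ha' /zfun (local_pre a) (local_pre a') (local_disj _ _ Dab) (local_disj _ _ Dab') Ha; reflexivity.
case Hy: (hasprefix b' x).
  rewrite -(decomp Hy) Hb' /zfun (local_disj _ _ Dba) (local_disj _ _ Dba') (local_pre b) (local_pre b') Hb; reflexivity.
case: Hg => _ _ E1 E2.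
have N1 : hasprefix a (gi x) = false.
  apply/negP => H; move: Hx; rewrite -(E2 x) -(decomp H) Ha hp_pre; done.
have N2 : hasprefix b (gi x) = false.
  apply/negP => H; move: Hy; rewrite -(E2 x) -(decomp H) Hb hp_pre; done.
by rewrite /zfun !local_out ?N1 ?N2 ?Hx ?Hy // E2.
Qed.



Lemma conj g gi a a' b b' : good g gi -> ConeMap g a a' -> ConeMap g b b' ->
  disj a b -> disj a' b' -> Z a b -> Z a' b'.
Proof.
move=> Hg Ha Hb D D' HZ.
have G := good_comp (good_comp (good_sym Hg) HZ) Hg.
apply: good_ext G _ _ _; try (move=> x; exact: zinv).
move=> x /=; exact: conj_id Hg Ha Hb D D' x.
Qed.


Lemma sp3 a b c (e : cantor) : shift 3 (prepend [:: a; b; c] e) = e.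
Proof. exact: (shift_prep [:: a; b; c] e). Qed.

Lemma P0_0 e : pnmap 0 (prepend [:: false] e) = prepend [:: true] e.
Proof. rewrite /pnmap /= sp1. reflexivity. Qed.
Lemma P0_1 e : pnmap 0 (prepend [:: true] e) = prepend [:: false] e.
Proof. rewrite /pnmap /= sp1. reflexivity. Qed.
Lemma P1_0 e : pnmap 1 (prepend [:: false] e) = prepend [:: true; false] e.
Proof. rewrite /pnmap /= pre2. reflexivity. Qed.
Lemma P1_10 e : pnmap 1 (prepend [:: true; false] e) = prepend [:: true; true] e.
Proof. rewrite /pnmap /= sp2. reflexivity. Qed.
Lemma P1_11 e : pnmap 1 (prepend [:: true; true] e) = prepend [:: false] e.
Proof. rewrite /pnmap /= sp2. reflexivity. Qed.
Lemma P2_0 e : pnmap 2 (prepend [:: false] e) = prepend [:: true; false] e.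
Proof. rewrite /pnmap /= pre2. reflexivity. Qed.
Lemma P2_10 e : pnmap 2 (prepend [:: true; false] e) = prepend [:: true; true; false] e.
Proof. rewrite /pnmap /= -prep_cat. reflexivity. Qed.
Lemma P2_110 e : pnmap 2 (prepend [:: true; true; false] e) = prepend [:: true; true; true] e.
Proof. rewrite /pnmap /= sp3. reflexivity. Qed.
Lemma P2_111 e : pnmap 2 (prepend [:: true; true; true] e) = prepend [:: false] e.
Proof. rewrite /pnmap /= sp3. reflexivity. Qed.

Lemma pre3 a b c (e : cantor) : prepend [:: a; b] (prepend [:: c] e) = prepend [:: a; b; c] e.
Proof. rewrite -prep_cat. reflexivity. Qed.

Definition p0 := pnmap 0.
Definition p1 := pnmap 1.
Definition p2 := pnmap 2.
Definition p1i x := p1 (p1 x).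
Definition p2i x := p2 (p2 (p2 x)).

Lemma inS_gen g : S_gen g -> inS g.
Proof. by move=> Hg; apply: (inS_ext (inS_mul inS_id Hg)) => x i. Qed.

Lemma good_p0 : good p0 p0.
Proof.
have E : forall x, p0 (p0 x) = x.
  elim/cases1 => [[]] e; rewrite /p0; [by rewrite P0_1 P0_0 | by rewrite P0_0 P0_1].
split; try exact: E; exact: inS_gen (Sgen_p 0).
Qed.

Lemma good_p1 : good p1 p1i.
Proof.
have E : forall x, p1 (p1 (p1 x)) = x.
  elim/cases1 => [[]] e; last by rewrite /p1 P1_0 P1_10 P1_11.
  elim/cases1: e => [[]] e; rewrite pre2 /p1.
  - by rewrite P1_11 P1_0 P1_10.
  - by rewrite P1_10 P1_11 P1_0.
have H1 := inS_gen (Sgen_p 1).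
split; try exact: E.
- exact: H1.
- exact: (inS_comp H1 H1).
Qed.

Lemma good_p2 : good p2 p2i.
Proof.
have E : forall x, p2 (p2 (p2 (p2 x))) = x.
  elim/cases1 => [[]] e; last by rewrite /p2 P2_0 P2_10 P2_110 P2_111.
  elim/cases1: e => [[]] e; rewrite pre2 /p2; last by rewrite P2_10 P2_110 P2_111 P2_0.
  elim/cases1: e => [[]] e; rewrite pre3.
  - by rewrite P2_111 P2_0 P2_10 P2_110.
  - by rewrite P2_110 P2_111 P2_0 P2_10.
have H1 := inS_gen (Sgen_p 2).
split; try exact: E.
- exact: H1.
- exact: (inS_comp (inS_comp H1 H1) H1).
Qed.

Definition xinv (x : cantor) : cantor :=
  if x 0 then (if x 1 then prepend [:: true] (shift 2 x) else prepend [:: false; true] (shift 2 x))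
  else prepend [:: false; false] (shift 1 x).

Lemma X1 e : xmap (prepend [:: false; false] e) = prepend [:: false] e.
Proof. rewrite /xmap /= sp2. reflexivity. Qed.
Lemma X2 e : xmap (prepend [:: false; true] e) = prepend [:: true; false] e.
Proof. rewrite /xmap /= sp2. reflexivity. Qed.
Lemma X3 e : xmap (prepend [:: true] e) = prepend [:: true; true] e.
Proof. rewrite /xmap /= sp1. reflexivity. Qed.
Lemma Xi1 e : xinv (prepend [:: false] e) = prepend [:: false; false] e.
Proof. rewrite /xinv /= sp1. reflexivity. Qed.
Lemma Xi2 e : xinv (prepend [:: true; false] e) = prepend [:: false; true] e.
Proof. rewrite /xinv /= sp2. reflexivity. Qed.
Lemma Xi3 e : xinv (prepend [:: true; true] e) = prepend [:: true] e.
Proof. rewrite /xinv /= sp2. reflexivity. Qed.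

Lemma xxi x : xmap (xinv x) = x.
Proof.
elim/cases1: x => [[]] e; last by rewrite Xi1 X1.
elim/cases1: e => [[]] e; rewrite pre2.
- by rewrite Xi3 X3.
- by rewrite Xi2 X2.
Qed.

Lemma xix x : xinv (xmap x) = x.
Proof.
elim/cases1: x => [[]] e; first by rewrite X3 Xi3.
elim/cases1: e => [[]] e; rewrite pre2.
- by rewrite X2 Xi2.
- by rewrite X1 Xi1.
Qed.

Lemma good_x v : good (local v xmap) (local v xinv).
Proof.
apply: good_gen (Sgen_x v) _ _ => x.
- by rewrite local_comp (local_ext _ _ xix) local_id.
- by rewrite local_comp (local_ext _ _ xxi) local_id.
Qed.


Lemma disj_cons x y p q : x != y -> disj (x :: p) (y :: q).
Proof. exact: (@disj_sib [::]). Qed.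

Lemma disj_consc c p q : disj p q -> disj (c :: p) (c :: q).
Proof.
move=> H e; rewrite !hp_cons => /andP[_ h1] /andP[_ h2]; exact: H h1 h2.
Qed.

Lemma disj_pfx w p q : disj p q -> disj (w ++ p) (w ++ q).
Proof. elim: w => [|c w IH] //= H; exact: disj_consc (IH H). Qed.

Lemma disj_catr a b q : disj a b -> disj a (b ++ q).
Proof. by move=> H; apply: disj_sym; apply: disj_catl; apply: disj_sym. Qed.

Lemma root_id e : ymap e =
  local [:: true; true] ymap (local [:: true; false] ymap_inv (local [:: false] ymap (xmap e))).
Proof.
have D1 : disj [:: true; true] [:: false] by apply: disj_cons.
have D2 : disj [:: true; true] [:: true; false] by apply: disj_consc; apply: disj_cons.
have D3 : disj [:: false] [:: true; false] by apply: disj_cons.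
have D4 : disj [:: false] [:: true; true] by apply: disj_cons.
have D5 : disj [:: true; false] [:: false] by apply: disj_cons.
have D6 : disj [:: true; false] [:: true; true] by apply: disj_consc; apply: disj_cons.
elim/cases1: e => [[]] e.
  by rewrite Y3 X3 (local_disj _ _ D1) (local_disj _ _ D2) (local_pre [:: true; true]).
elim/cases1: e => [[]] e; rewrite pre2.
  by rewrite Y2 X2 (local_disj _ _ D5) (local_pre [:: true; false]) (local_disj _ _ D6).
by rewrite Y1 X1 (local_pre [:: false]) (local_disj _ _ D3) (local_disj _ _ D4).
Qed.

Lemma loc_root w x : local w ymap x =
  local (w ++ [:: true; true]) ymap (local (w ++ [:: true; false]) ymap_inv
    (local (w ++ [:: false]) ymap (local w xmap x))).
Proof.
rewrite -!local_cat !local_comp; apply: local_ext => e; exact: root_id.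
Qed.


Lemma I11 w t x : zfun w t x =
  zfun (w ++ [:: true; true]) t (zfun (w ++ [:: false]) (w ++ [:: true; false]) (local w xmap x)).
Proof. by rewrite /zfun loc_root. Qed.

Lemma I0 w t x : disj t w -> zfun w t x =
  zfun (w ++ [:: true; true]) (w ++ [:: true; false]) (zfun (w ++ [:: false]) t (local w xmap x)).
Proof.
move=> D; rewrite /zfun loc_root.
set eta := local (w ++ [:: false]) ymap (local w xmap x).
have D1 : disj t (w ++ [:: true; true]) by apply: disj_catr.
have D2 : disj t (w ++ [:: true; false]) by apply: disj_catr.
have D3 : disj (w ++ [:: true; true]) (w ++ [:: true; false]).
  by apply: disj_pfx; apply: disj_consc; apply: disj_cons.
by rewrite (local_comm _ _ _ D1) (local_comm _ _ _ D2) (local_comm _ _ _ D3).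
Qed.

Lemma solveA F Fi A Ai B Bi C Ci : good F Fi -> good A Ai -> good C Ci ->
  (forall x, Bi (B x) = x) -> (forall x, B (Bi x) = x) ->
  (forall x, F x = B (A (C x))) -> good B Bi.
Proof.
move=> HF HA HC E1 E2 E.
have G := good_comp (good_comp (good_sym HA) (good_sym HC)) HF.
apply: good_ext G _ E1 E2 => y /=.
case: HA => _ _ _ a2; case: HC => _ _ _ c2.
by rewrite E c2 a2.
Qed.

Lemma solveB F Fi A Ai B Bi C Ci : good F Fi -> good A Ai -> good C Ci ->
  (forall x, Bi (B x) = x) -> (forall x, B (Bi x) = x) ->
  (forall x, F x = A (B (C x))) -> good B Bi.
Proof.
move=> HF HA HC E1 E2 E.
have G := good_comp (good_comp (good_sym HC) HF) (good_sym HA).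
apply: good_ext G _ E1 E2 => y /=.
case: HA => _ _ a1 _; case: HC => _ _ _ c2.
by rewrite E c2 a1.
Qed.

Lemma CMx1 v : ConeMap (local v xmap) (v ++ [:: true]) (v ++ [:: true; true]).
Proof. by move=> e; rewrite !prep_cat local_pre X3. Qed.
Lemma CMx00 v : ConeMap (local v xmap) (v ++ [:: false; false]) (v ++ [:: false]).
Proof. by move=> e; rewrite !prep_cat local_pre X1. Qed.
Lemma CMx01 v : ConeMap (local v xmap) (v ++ [:: false; true]) (v ++ [:: true; false]).
Proof. by move=> e; rewrite !prep_cat local_pre X2. Qed.
Lemma CMxd v t : disj t v -> ConeMap (local v xmap) t t.
Proof. by move=> D e; rewrite local_disj. Qed.

Definition R c c' := exists g gi, good g gi /\ ConeMap g c c'.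

Lemma R_refl c : R c c.
Proof. by exists id, id; split; [exact: good_id | move=> e]. Qed.
Lemma R_sym c c' : R c c' -> R c' c.
Proof. by case=> g [gi [G C]]; exists gi, g; split; [exact: good_sym | exact: CM_inv G C]. Qed.
Lemma R_trans a b c : R a b -> R b c -> R a c.
Proof.
case=> g [gi [G C]] [h [hi [H D]]]; exists (fun x => h (g x)), (fun x => gi (hi x)).
by split; [exact: good_comp | exact: CM_comp].
Qed.
Lemma R_cat c c' q : R c c' -> R (c ++ q) (c' ++ q).
Proof. by case=> g [gi [G C]]; exists g, gi; split => //; exact: CM_cat. Qed.
Lemma R_x v c c' : ConeMap (local v xmap) c c' -> R c c'.
Proof. by move=> C; exists (local v xmap), (local v xinv); split => //; exact: good_x. Qed.

Lemma R_01 : R [:: false] [:: true].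
Proof. exists p0, p0; split; [exact: good_p0 | exact: P0_0]. Qed.
Lemma R_10_0 : R [:: true; false] [:: false].
Proof. apply: R_sym; exists p1, p1i; split; [exact: good_p1 | exact: P1_0]. Qed.

Lemma last2 (w : seq bool) : 1 < size w -> exists v a b, w = v ++ [:: a; b].
Proof.
case/lastP: w => [|w b] //; case/lastP: w => [|v a] //.
by move=> _; exists v, a, b; rewrite -!cats1 -catA.
Qed.

Lemma cat_ne (v q : seq bool) : q != [::] -> v ++ q != [::].
Proof. by case: q => // x q _; case: v. Qed.

Lemma CT_aux n : forall w, size w <= n -> w != [::] -> R w [:: true].
Proof.
elim: n => [|n IH] w.
  by rewrite leqn0 => /nilP ->.
move=> Hs Hne.
case: (ltnP 1 (size w)) => H2; last first.
  case: w Hs Hne H2 => [|c [|]] //= _ _ _; case: c; [exact: R_refl | exact: R_01].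
have [v [a [b Ew]]] := last2 H2; subst w.
have Sv : size v < n by move: Hs; rewrite size_cat /= addn2 ltnS.
have IHv q : size q <= 1 -> q != [::] -> R (v ++ q) [:: true].
  move=> Hq Hq'; apply: IH => //; last exact: cat_ne.
  by rewrite size_cat; apply: leq_trans (leq_add (leqnn (size v)) Hq) _; rewrite addn1.
have C10 : R (v ++ [:: true; false]) [:: true].
  clear H2 Hne; case/lastP: v Sv IHv Hs => [|v c] Sv IHv Hs.
    exact: R_trans R_10_0 R_01.
  case: c Sv IHv Hs => Sv IHv Hs.
  - rewrite -cats1 -catA /=.
    have := R_sym (R_x (CM_cat [:: false] (CMx1 v))); rewrite -!catA /= => Hr.
    apply: R_trans Hr _; apply: IH; last exact: cat_ne.
    by move: Sv; rewrite size_rcons size_cat /= addn2.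
  - rewrite -cats1 -catA /=.
    have := R_x (CM_cat [:: false] (CMx01 v)); rewrite -!catA /= => Hr.
    apply: R_trans Hr _.
    have := R_x (CMx00 (v ++ [:: true])); rewrite -!catA /= => Hr2.
    apply: R_trans Hr2 _; apply: IH; last exact: cat_ne.
    by move: Sv; rewrite size_rcons size_cat /= addn2.
clear H2 Hs Hne; case: a; case: b.
- have H1 := IHv [:: true] isT isT. have H2 := R_sym (R_x (CMx1 v)). exact: R_trans H2 H1.
- exact: C10.
- exact: R_trans (R_x (CMx01 v)) C10.
- exact: R_trans (R_x (CMx00 v)) (IHv [:: false] isT isT).
Qed.

Lemma CT w : w != [::] -> R [:: true] w.
Proof. by move=> H; apply: R_sym; apply: (CT_aux (leqnn (size w)) H). Qed.


Lemma composeABC F Fi A Ai B Bi C Ci : good A Ai -> good B Bi -> good C Ci ->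
  (forall x, Fi (F x) = x) -> (forall x, F (Fi x) = x) ->
  (forall x, F x = B (A (C x))) -> good F Fi.
Proof.
move=> HA HB HC E1 E2 E.
have G := good_comp (good_comp HC HA) HB.
apply: good_ext G _ E1 E2 => y /=; by rewrite E.
Qed.

Lemma Zw : Z [:: true; false] [:: true; true; false].
Proof.
have G := good_gen Sgen_w (zinv [:: true; false] [:: true; true; false])
   (zinv [:: true; true; false] [:: true; false]).
apply: good_ext G _ _ _ => x; [reflexivity | exact: zinv | exact: zinv].
Qed.

Lemma d_0_10 : disj [:: false] [:: true; false].
Proof. exact: disj_cons. Qed.
Lemma d_10_110 : disj [:: true; false] [:: true; true; false].
Proof. apply: disj_consc; exact: disj_cons. Qed.
Lemma d_10_0 : disj [:: true; false] [:: false].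
Proof. exact: disj_cons. Qed.
Lemma d_0_11 : disj [:: false] [:: true; true].
Proof. exact: disj_cons. Qed.
Lemma d_0_111 : disj [:: false] [:: true; true; true].
Proof. exact: disj_cons. Qed.

Lemma K0 : Z [:: false] [:: true; false].
Proof.
apply: (conj (good_sym good_p2) (CM_inv good_p2 P2_0) (CM_inv good_p2 P2_10) d_10_110 d_0_10 Zw).
Qed.

Lemma Kall w : Z (w ++ [:: false]) (w ++ [:: true; false]).
Proof.
case: (eqVneq w [::]) => [->|Hw]; first exact: K0.
have [g [gi [G C]]] := CT Hw.
apply: (conj G (CM_cat [:: false] C) (CM_cat [:: true; false] C) d_10_110 _ Zw).
apply: disj_pfx; exact: disj_cons.
Qed.

Lemma Z0_11 : Z [:: false] [:: true; true].
Proof.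
exact: (conj (good_sym good_p1) (CM_inv good_p1 P1_0) (CM_inv good_p1 P1_11) d_10_0 d_0_11 (Z_sym K0)).
Qed.

Lemma Sib1 : Z [:: true; false] [:: true; true].
Proof. exact: Z_trans (Z_sym K0) Z0_11. Qed.

Lemma Z0_111 : Z [:: false] [:: true; true; true].
Proof.
exact: (conj (good_sym good_p2) (CM_inv good_p2 P2_0) (CM_inv good_p2 P2_111) d_10_0 d_0_111 (Z_sym K0)).
Qed.

Lemma Sib0 : Z [:: false] [:: true].
Proof.
apply: Z_sym.
apply: (composeABC (Kall [:: true]) (Z_sym Z0_111) (good_x [:: true])); try (move=> x; exact: zinv).
move=> x; exact: I11.
Qed.

Lemma Sib w : Z (w ++ [:: false]) (w ++ [:: true]).
Proof.
case: (eqVneq w [::]) => [->|Hw]; first exact: Sib0.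
have [g [gi [G C]]] := CT Hw.
apply: (conj G (CM_cat [:: false] C) (CM_cat [:: true] C) _ _ Sib1).
  apply: disj_consc; exact: disj_cons.
apply: disj_pfx; exact: disj_cons.
Qed.

Lemma G1 v t : disj t v -> Z v t -> Z (v ++ [:: true]) t.
Proof.
move=> D HZ.
have H11 : Z (v ++ [:: true; true]) t.
  apply: (solveA HZ (Kall v) (good_x v)); try (move=> x; exact: zinv).
  move=> x; exact: I11.
have Gi := good_sym (good_x v).
apply: (conj Gi (CM_inv (good_x v) (CMx1 v)) _ _ _ H11).
- move=> e; rewrite local_disj //; exact: disj_sym.
- exact: disj_catl (disj_sym D).
- exact: disj_catl (disj_sym D).
Qed.

Lemma G0 v t : disj t v -> Z v t -> Z (v ++ [:: false]) t.
Proof.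
move=> D HZ.
have S1 := Sib (v ++ [:: true]); rewrite -!catA /= in S1.
apply: (solveB HZ (Z_sym S1) (good_x v)); try (move=> x; exact: zinv).
move=> x; exact: I0.
Qed.

Lemma Grow q : forall v t, disj t v -> Z v t -> Z (v ++ q) t.
Proof.
elim: q => [|b q IH] v t D HZ; first by rewrite cats0.
rewrite -cat1s catA; apply: IH.
  exact: disj_catr.
by case: b; [exact: G1 | exact: G0].
Qed.

Lemma split_indep (s t : seq bool) : ~~ prefix s t -> ~~ prefix t s ->
  exists u a s' t', s = u ++ a :: s' /\ t = u ++ (~~ a) :: t'.
Proof.
elim: s t => [|x s IH] [|y t] //=.
case: (eqVneq x y) => [<-|Hxy]; rewrite ?eqxx /= => H1 H2.
  have [u [a [s' [t' [-> ->]]]]] := IH t H1 H2.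
  by exists (x :: u), a, s', t'.
exists [::], x, s, t; split => //=.
by case: x y Hxy => [] [].
Qed.

Theorem lemma6p7 (s t : seq bool) :
  ~~ prefix s t -> ~~ prefix t s ->
  inS (fun xi => local t ymap_inv (local s ymap xi)).
Proof.
move=> H1 H2.
have [u [a [s' [t' [-> ->]]]]] := split_indep H1 H2.
have Hsib : Z (u ++ [:: a]) (u ++ [:: ~~ a]).
  by case: a; [apply: Z_sym; exact: Sib | exact: Sib].
have D : disj (u ++ [:: a]) (u ++ [:: ~~ a]).
  by apply: disj_pfx; apply: disj_cons; case: (a).
have HR : Z (u ++ [:: a]) (u ++ (~~ a) :: t').
  apply: Z_sym; rewrite -cat1s catA; apply: Grow (Z_sym Hsib); exact: D.
have HL : Z (u ++ a :: s') (u ++ (~~ a) :: t').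
  rewrite -cat1s catA; apply: Grow HR.
  rewrite -cat1s catA; exact: disj_catl (disj_sym D).
by case: HL.
Qed.
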